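(* Assume each $\tilde f_{i,j}:\mathbb{R}^d\to\mathbb{R}$ is convex and $\tilde L$-smooth, let $\lambda>0$ and $p\in(0,1)$, and let $x,w\in\mathbb{R}^{nd}$ be arbitrary. Let $g\in\mathbb{R}^{nd}$ be the random estimator defined in the context. Then $$\mathbb{E}\,\|g-\nabla F(x)\|^2\le2\mathcal{L}\,D_F(w,x),\qquad\text{where }\ \mathcal{L}=\max\Big\{\frac{\tilde L}{n(1-p)},\frac{\lambda}{np}\Big\}.$$
   Context: Each local loss is a finite sum $f_i=\frac1m\sum_{j=1}^m\tilde f_{i,j}$. For $x=[x_1,\dots,x_n]\in\mathbb{R}^{nd}$, define $$F(x)=\frac1n\sum_i f_i(x_i)+\frac{\lambda}{2n}\sum_i\|x_i-\bar x\|^2,\qquad \bar x=\frac1n\sum_i x_i .$$ Its gradient has blocks $(\nabla F(x))_i=\frac1n\nabla f_i(x_i)+\frac\lambda n(x_i-\bar x)$. The Bregman divergence is $D_F(w,x)=F(w)-F(x)-\langle\nabla F(x),w-x\rangle$. The estimator $g$ is defined as follows. - With probability $1-p$: for each client $i$ an index $j\in\{1,\dots,m\}$ is drawn uniformly at random, and $$g_i=\frac{1}{n(1-p)}\big(\nabla\tilde f_{i,j}(x_i)-\nabla\tilde f_{i,j}(w_i)\big)+\frac1n\nabla f_i(w_i)+\frac\lambda n(w_i-\bar w).$$ - With probability $p$: $$g_i=\frac{\lambda}{np}(x_i-\bar x)-\frac{(p^{-1}-1)\lambda}{n}(w_i-\bar w)+\frac1n\nabla f_i(w_i).$$ *)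

(* Defs.v *)
From HB Require Import structures.
From mathcomp Require Import all_boot all_order all_algebra.
From mathcomp Require Import all_classical all_reals all_analysis.
Set Implicit Arguments. Unset Strict Implicit. Unset Printing Implicit Defensive.
Import Order.TTheory GRing.Theory Num.Theory.
Import numFieldNormedType.Exports.
Local Open Scope ring_scope.

Section Defs.
Variable R : realType.

Definition dotv d (u v : 'rV[R]_d) : R := \sum_(k < d) u ord0 k * v ord0 k.
Definition sqnorm d (u : 'rV[R]_d) : R := dotv u u.
Definition enorm d (u : 'rV[R]_d) : R := Num.sqrt (sqnorm u).

Definition grad d (f : 'rV[R]_d -> R) (x : 'rV[R]_d) : 'rV[R]_d :=
  \row_(k < d) ('D_(delta_mx 0 k) f x).

Definition convex_fun d (f : 'rV[R]_d -> R) : Prop :=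
  forall (x y : 'rV[R]_d) (t : R), 0 <= t -> t <= 1 ->
    f (t *: x + (1 - t) *: y) <= t * f x + (1 - t) * f y.

Definition smooth_fun d (L : R) (f : 'rV[R]_d -> R) : Prop :=
  (forall x, differentiable f x) /\
  forall x y, enorm (grad f x - grad f y) <= L * enorm (x - y).

(* points of R^{nd}: matrices whose i-th row is the block x_i *)
Definition blk n d (x : 'M[R]_(n, d)) (i : 'I_n) : 'rV[R]_d := row i x.
Definition mean n d (x : 'M[R]_(n, d)) : 'rV[R]_d := n%:R^-1 *: \sum_(i < n) row i x.
Definition dotM n d (x y : 'M[R]_(n, d)) : R := \sum_(i < n) dotv (row i x) (row i y).
Definition sqnormM n d (x : 'M[R]_(n, d)) : R := dotM x x.

Section Problem.
Variables (n m d : nat) (ft : 'I_n -> 'I_m -> 'rV[R]_d -> R) (lam p : R).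

Definition floc (i : 'I_n) (z : 'rV[R]_d) : R := m%:R^-1 * \sum_(j < m) ft i j z.

Definition Fobj (x : 'M[R]_(n, d)) : R :=
  n%:R^-1 * \sum_(i < n) floc i (row i x)
  + lam / (2 * n%:R) * \sum_(i < n) sqnorm (row i x - mean x).

Definition gradF (x : 'M[R]_(n, d)) : 'M[R]_(n, d) :=
  \matrix_(i < n, k < d)
    (n%:R^-1 *: grad (floc i) (row i x) + (lam / n%:R) *: (row i x - mean x)) ord0 k.

Definition bregF (w x : 'M[R]_(n, d)) : R := Fobj w - Fobj x - dotM (gradF x) (w - x).

(* estimator, branch with probability 1-p, given the indices js i of the clients *)
Definition g_sample (x w : 'M[R]_(n, d)) (js : {ffun 'I_n -> 'I_m}) : 'M[R]_(n, d) :=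
  \matrix_(i < n, k < d)
    ((n%:R * (1 - p))^-1 *: (grad (ft i (js i)) (row i x) - grad (ft i (js i)) (row i w))
     + n%:R^-1 *: grad (floc i) (row i w)
     + (lam / n%:R) *: (row i w - mean w)) ord0 k.

(* estimator, branch with probability p *)
Definition g_full (x w : 'M[R]_(n, d)) : 'M[R]_(n, d) :=
  \matrix_(i < n, k < d)
    ((lam / (n%:R * p)) *: (row i x - mean x)
     - ((p^-1 - 1) * lam / n%:R) *: (row i w - mean w)
     + n%:R^-1 *: grad (floc i) (row i w)) ord0 k.

(* E ||g - grad F(x)||^2 : with prob. 1-p the indices j_i are drawn independently and
   uniformly in {0..m-1} (m^n equally likely index vectors); with prob. p the second branch. *)
Definition expected_sqerr (x w : 'M[R]_(n, d)) : R :=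
  (1 - p) * ((m ^ n)%:R^-1 *
     \sum_(js : {ffun 'I_n -> 'I_m}) sqnormM (g_sample x w js - gradF x))
  + p * sqnormM (g_full x w - gradF x).

End Problem.
End Defs.

(* Main.v *)
Require Import Defs.
From HB Require Import structures.
From mathcomp Require Import all_boot all_order all_algebra.
From mathcomp Require Import all_classical all_reals all_analysis.
From mathcomp Require Import ring lra.
Import Order.TTheory GRing.Theory Num.Theory.
Import numFieldNormedType.Exports.
Local Open Scope ring_scope.
Local Open Scope classical_set_scope.

Section Dot.
Variable R : realType.
Variable d : nat.
Implicit Types u v w : 'rV[R]_d.

Lemma dotvC u v : dotv u v = dotv v u.
Proof. by rewrite /dotv; apply: eq_bigr => k _; rewrite mulrC. Qed.
Lemma dotvDl u v w : dotv (u + w) v = dotv u v + dotv w v.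
Proof. by rewrite /dotv -big_split; apply: eq_bigr => k _; rewrite !mxE mulrDl. Qed.
Lemma dotvBl u v w : dotv (u - w) v = dotv u v - dotv w v.
Proof. by rewrite /dotv -sumrB; apply: eq_bigr => k _; rewrite !mxE mulrBl. Qed.
Lemma dotvZl a u v : dotv (a *: u) v = a * dotv u v.
Proof. by rewrite /dotv mulr_sumr; apply: eq_bigr => k _; rewrite !mxE mulrA. Qed.
Lemma dotvDr u v w : dotv v (u + w) = dotv v u + dotv v w.
Proof. by rewrite dotvC dotvDl !(dotvC v). Qed.
Lemma dotvBr u v w : dotv v (u - w) = dotv v u - dotv v w.
Proof. by rewrite dotvC dotvBl !(dotvC v). Qed.
Lemma dotvZr a u v : dotv v (a *: u) = a * dotv v u.
Proof. by rewrite dotvC dotvZl dotvC. Qed.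
Lemma dotv0l v : dotv 0 v = 0.
Proof. by rewrite /dotv big1 // => k _; rewrite mxE mul0r. Qed.
Lemma dotv0r v : dotv v 0 = 0.
Proof. by rewrite dotvC dotv0l. Qed.
Lemma sqnorm_ge0 u : 0 <= sqnorm u.
Proof. by rewrite /sqnorm /dotv; apply: sumr_ge0 => k _; rewrite -expr2 sqr_ge0. Qed.
Lemma sqnorm_eq0 u : sqnorm u = 0 -> u = 0.
Proof.
rewrite /sqnorm /dotv => /eqP; rewrite psumr_eq0; last by move=> k _; rewrite -expr2 sqr_ge0.
move=> /allP H; apply/rowP => k; rewrite mxE.
have := H k (mem_index_enum k); rewrite -expr2 sqrf_eq0 => /eqP.
by rewrite (ord1 ord0).
Qed.
Lemma enorm_sq u : enorm u ^+ 2 = sqnorm u.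
Proof. by rewrite /enorm sqr_sqrtr // sqnorm_ge0. Qed.
Lemma enorm_ge0 u : 0 <= enorm u.
Proof. exact: sqrtr_ge0. Qed.
Lemma sqnormZ a u : sqnorm (a *: u) = a ^+ 2 * sqnorm u.
Proof. by rewrite /sqnorm dotvZl dotvZr mulrA expr2. Qed.
Lemma enormZ a u : enorm (a *: u) = `|a| * enorm u.
Proof. by rewrite /enorm sqnormZ sqrtrM ?sqr_ge0 // sqrtr_sqr. Qed.
Lemma CS u v : dotv u v <= enorm u * enorm v.
Proof.
set a := enorm u; set b := enorm v.
have H : 0 <= sqnorm (b *: u - a *: v) by exact: sqnorm_ge0.
rewrite /sqnorm dotvBl !dotvBr !dotvZl !dotvZr (dotvC v u) in H.
rewrite -/(sqnorm u) -/(sqnorm v) -(enorm_sq u) -(enorm_sq v) -/a -/b in H.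
have a0 : 0 <= a by exact: enorm_ge0.
have b0 : 0 <= b by exact: enorm_ge0.
have [ab0|ab0] := eqVneq (a * b) 0.
  move: ab0 => /eqP; rewrite mulf_eq0 => /orP [] /eqP e.
  - have : sqnorm u = 0 by rewrite -enorm_sq -/a e expr2 mulr0.
    by move/sqnorm_eq0 => ->; rewrite dotv0l e mul0r.
  - have : sqnorm v = 0 by rewrite -enorm_sq -/b e expr2 mulr0.
    by move/sqnorm_eq0 => ->; rewrite dotv0r e mulr0.
have abp : 0 < a * b by rewrite lt0r ab0 mulr_ge0.
nra.
Qed.
End Dot.

Lemma derive_dot (R : realType) d (f : 'rV[R]_d -> R) x v :
  differentiable f x -> 'D_v f x = dotv (grad f x) v.
Proof.
move=> df; rewrite deriveE //.
rewrite {1}(row_sum_delta v) linear_sum /dotv; apply: eq_bigr => k _.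
rewrite linearZ /= mxE deriveE // mulrC.
done. Qed.

Lemma poly_der (R : realType) (a b c t : R) :
  is_derive t 1 (fun s : R => a + s * b + c * s ^+ 2) (b + c * (2 * t)).
Proof.
apply: is_derive_eq; rewrite scaler0 add0r mul1r /GRing.scale /=; ring.
Qed.

Lemma line_der (R : realType) d (f : 'rV[R]_d -> R) y v t :
  differentiable f (t *: v + y) ->
  is_derive t 1 (fun s : R => f (s *: v + y)) (dotv (grad f (t *: v + y)) v).
Proof.
move=> df.
have E : (fun s : R => s^-1 *: (((fun s : R => f (s *: v + y)) \o shift t) (s *: 1)
             - (fun s : R => f (s *: v + y)) t))
  = (fun s : R => s^-1 *: ((f \o shift (t *: v + y)) (s *: v) - f (t *: v + y))).
  apply: funext => s /=; congr (_ *: (f _ - _)).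
  by rewrite [s%:A]mulr1 scalerDl addrA.
have dv : derivable f (t *: v + y) v by exact: diff_derivable.
constructor; first by rewrite /derivable E.
by rewrite /derive E -/(derive f (t *: v + y) v) derive_dot.
Qed.

Lemma descent (R : realType) d (f : 'rV[R]_d -> R) Lt y z :
  smooth_fun Lt f -> f z <= f y + dotv (grad f y) (z - y) + Lt / 2 * sqnorm (z - y).
Proof.
move=> [dif lip].
set v := z - y.
set D0 := dotv (grad f y) v.
set K := Lt / 2 * sqnorm v.
pose g := fun s : R => f (s *: v + y) - (f y + s * D0 + K * s ^+ 2).
have gd : forall t : R, is_derive t (1 : R) g (dotv (grad f (t *: v + y)) v - (D0 + K * (2 * t))).
  move=> t; apply: is_deriveB; [exact: line_der | exact: poly_der].
have mono : g 1 <= g 0.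
  apply: (@ler0_derive1_le_cc _ g 0 1).
  - by move=> t _; exact: (@ex_derive _ _ _ _ _ _ _ (gd t)).
  - move=> t; rewrite in_itv /= => /andP [t0 t1].
    rewrite derive1E (@derive_val _ _ _ _ _ _ _ (gd t)).
    have e1 : dotv (grad f (t *: v + y)) v - D0 = dotv (grad f (t *: v + y) - grad f y) v.
      by rewrite dotvBl.
    have e2 := @CS R d (grad f (t *: v + y) - grad f y) v.
    have e3 := lip (t *: v + y) y.
    rewrite addrK enormZ gtr0_norm // in e3.
    have e4 : enorm (grad f (t *: v + y) - grad f y) * enorm v <= Lt * (t * enorm v) * enorm v.
      by apply: ler_wpM2r => //; exact: enorm_ge0.
    have e5 : enorm v * enorm v = sqnorm v by rewrite -expr2 enorm_sq.
    rewrite /K.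
    nra.
  - by apply: derivable_within_continuous => t _; exact: (@ex_derive _ _ _ _ _ _ _ (gd t)).
  - by rewrite in_itv /= lexx ler01.
  - by rewrite in_itv /= lexx ler01.
  - exact: ler01.
rewrite /g scale0r add0r scale1r subrK mul0r expr0n /= mulr0 addr0 addr0 subrr in mono.
rewrite -/v -/D0 -/K; lra.
Qed.

Lemma right_sub (R : realType) (T : topologicalType) (g : R -> T) (l : T) :
  g @ 0^' --> l -> g @ 0^'+ --> l.
Proof.
move=> H; apply: cvg_trans H.
move=> A /=; rewrite !nbhs_filterE /= /within.
rewrite /dnbhs /at_right /within /=; apply: filterS => z Az z0; apply: Az.
by rewrite gt_eqF.
Qed.

Lemma grad_ineq (R : realType) d (f : 'rV[R]_d -> R) (x y : 'rV[R]_d) :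
  convex_fun f -> differentiable f x -> 'D_(y - x) f x <= f y - f x.
Proof.
move=> cf dfx.
have dv : derivable f x (y - x) by exact: diff_derivable.
set g := (fun h : R => h^-1 *: ((f \o shift x) (h *: (y - x)) - f x)).
have H : g @ 0^'+ --> 'D_(y - x) f x by apply: right_sub; exact: dv.
apply: (cvgr_to_le H).
near=> h.
have h0 : 0 < h by near: h; exact: nbhs_right_gt.
have h1 : h <= 1 by near: h; apply: nbhs_right_le; exact: ltr01.
rewrite /g /=.
have := cf y x h (ltW h0) h1.
have -> : h *: y + (1 - h) *: x = h *: (y - x) + x.
  by apply/matrixP => i k; rewrite !mxE; lra.
move=> hc.
rewrite -[X in _ <= X](mulKf (lt0r_neq0 h0)) /GRing.scale /=.
rewrite ler_pM2l ?invr_gt0 //; lra.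
Unshelve. all: by end_near. Qed.

Lemma cocoer (R : realType) d (f : 'rV[R]_d -> R) Lt X W :
  convex_fun f -> smooth_fun Lt f ->
  sqnorm (grad f W - grad f X) <= 2 * Lt * (f W - f X - dotv (grad f X) (W - X)).
Proof.
move=> cf sf; have [dif lip] := sf.
set G := grad f X; set H := grad f W.
have gi : dotv G (W - X) <= f W - f X by rewrite -derive_dot //; exact: grad_ineq.
have [Lp|Ln] := ltrP 0 Lt.
  set r := Lt^-1.
  have Lr : Lt * r = 1 by rewrite /r mulfV // gt_eqF.
  set z := W - r *: (H - G).
  have ds := @descent R d f Lt W z sf.
  have gz : dotv G (z - X) <= f z - f X by rewrite -derive_dot //; exact: grad_ineq.
  have ez1 : z - W = (- r) *: (H - G).
    by apply/matrixP => i k; rewrite !mxE; ring.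
  have ez2 : z - X = (W - X) + (- r) *: (H - G).
    by apply/matrixP => i k; rewrite !mxE; ring.
  rewrite ez1 sqnormZ dotvZr in ds.
  rewrite ez2 dotvDr dotvZr in gz.
  have eS : dotv H (H - G) - dotv G (H - G) = sqnorm (H - G) by rewrite -dotvBl.
  have S0 := @sqnorm_ge0 R d (H - G).
  have r0 : 0 < r by rewrite invr_gt0.
  have h1 : r * (dotv H (H - G) - dotv G (H - G)) - Lt / 2 * ((- r) ^+ 2 * sqnorm (H - G))
     <= f W - f X - dotv G (W - X) by lra.
  rewrite eS sqrrN expr2 in h1.
  have h2 : Lt / 2 * (r * r * sqnorm (H - G)) = r * sqnorm (H - G) / 2.
    by rewrite mulrA mulrA [Lt / 2 * r]mulrAC Lr; field.
  rewrite h2 in h1.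
  have h3 : Lt * (r * sqnorm (H - G)) = sqnorm (H - G) by rewrite mulrA Lr mul1r.
  nra.
have e := lip W X.
have n1 := @enorm_ge0 R d (grad f W - grad f X).
have n2 := @enorm_ge0 R d (W - X).
have e0 : enorm (grad f W - grad f X) = 0 by nra.
have S0 : sqnorm (grad f W - grad f X) = 0 by rewrite -enorm_sq e0 expr2 mul0r.
rewrite S0.
have [L0|L0] := eqVneq Lt 0; first by rewrite L0 mulr0 mul0r.
have Ln' : Lt < 0 by rewrite lt_neqAle L0.
have n0 : enorm (W - X) = 0 by nra.
have : sqnorm (W - X) = 0 by rewrite -enorm_sq n0 expr2 mul0r.
move/sqnorm_eq0 => WX.
have -> : W = X by apply/eqP; rewrite -subr_eq0 WX.
by rewrite !subrr dotv0r subrr mulr0.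
Qed.
Lemma grad_floc (R : realType) n m d (ft : 'I_n -> 'I_m -> 'rV[R]_d -> R) i z :
  (forall j, differentiable (ft i j) z) ->
  grad (floc ft i) z = m%:R^-1 *: \sum_(j < m) grad (ft i j) z.
Proof.
move=> df.
have -> : floc ft i = (m%:R^-1) \*: (\sum_(j < m) ft i j).
  by apply: funext => y; rewrite /floc /= fct_sumE.
apply/rowP => k; rewrite !mxE summxE.
rewrite deriveZ; last by apply: derivable_sum => j; exact: diff_derivable.
rewrite derive_sum; last by move=> j; exact: diff_derivable.
by congr (_ * _); apply: eq_bigr => j _; rewrite mxE.
Qed.
Section Entries.
Variables (R : realType) (n m d : nat) (ft : 'I_n -> 'I_m -> 'rV[R]_d -> R) (lam p : R).

Lemma sqnormM_E (z : 'M[R]_(n, d)) : sqnormM z = \sum_(i < n) \sum_(k < d) z i k ^+ 2.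
Proof. by rewrite /sqnormM /dotM /dotv; apply: eq_bigr => i _; apply: eq_bigr => k _; rewrite mxE expr2. Qed.

Lemma gs_entry x w js i k :
  (g_sample ft lam p x w js - gradF ft lam x) i k =
  (n%:R * (1 - p))^-1 * (grad (ft i (js i)) (row i x) ord0 k - grad (ft i (js i)) (row i w) ord0 k)
  + n%:R^-1 * grad (floc ft i) (row i w) ord0 k + lam / n%:R * (w i k - mean w ord0 k)
  - (n%:R^-1 * grad (floc ft i) (row i x) ord0 k + lam / n%:R * (x i k - mean x ord0 k)).
Proof. by rewrite !mxE. Qed.

Lemma gf_entry x w i k :
  (g_full ft lam p x w - gradF ft lam x) i k =
  (lam / (n%:R * p)) * (x i k - mean x ord0 k) - ((p^-1 - 1) * lam / n%:R) * (w i k - mean w ord0 k)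
  + n%:R^-1 * grad (floc ft i) (row i w) ord0 k
  - (n%:R^-1 * grad (floc ft i) (row i x) ord0 k + lam / n%:R * (x i k - mean x ord0 k)).
Proof. by rewrite !mxE. Qed.

Lemma mean_entry (x : 'M[R]_(n, d)) k : mean x ord0 k = n%:R^-1 * \sum_(i < n) x i k.
Proof. by rewrite !mxE summxE; congr (_ * _); apply: eq_bigr => i _; rewrite mxE. Qed.

End Entries.

Lemma dotv_suml (R : realType) d m (g : 'I_m -> 'rV[R]_d) v :
  dotv (\sum_(j < m) g j) v = \sum_(j < m) dotv (g j) v.
Proof.
rewrite /dotv exchange_big /=; apply: eq_bigr => k _.
by rewrite summxE mulr_suml.
Qed.

Section Breg.
Variables (R : realType) (n m d : nat) (ft : 'I_n -> 'I_m -> 'rV[R]_d -> R) (lam : R).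

Lemma rowBmean (w : 'M[R]_(n, d)) i k : (row i w - mean w) ord0 k = w i k - mean w ord0 k.
Proof. by rewrite !mxE. Qed.
Lemma rowBrow (w x : 'M[R]_(n, d)) i k : (row i w - row i x) ord0 k = w i k - x i k.
Proof. by rewrite !mxE. Qed.
Lemma gradF_row x i : row i (gradF ft lam x) =
  n%:R^-1 *: grad (floc ft i) (row i x) + (lam / n%:R) *: (row i x - mean x).
Proof. by apply/rowP => k; rewrite !mxE. Qed.

Lemma sum_tx (x : 'M[R]_(n, d)) k : (0 < n)%N -> \sum_(i < n) (x i k - mean x ord0 k) = 0.
Proof.
move=> hn; rewrite sumrB sumr_const card_ord mean_entry.
set S := \sum_(i < n) x i k.
rewrite -[(_ * S) *+ n]mulr_natr mulrAC mulVf ?mul1r ?subrr //.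
by rewrite pnatr_eq0 -lt0n.
Qed.

Lemma breg_decomp x w : (0 < n)%N -> (forall i j z, differentiable (ft i j) z) ->
  bregF ft lam w x =
  n%:R^-1 * \sum_(i < n) (m%:R^-1 * \sum_(j < m) (ft i j (row i w) - ft i j (row i x)
        - dotv (grad (ft i j) (row i x)) (row i w - row i x)))
  + lam / (2 * n%:R) * \sum_(i < n) \sum_(k < d)
        ((w i k - mean w ord0 k) - (x i k - mean x ord0 k)) ^+ 2.
Proof.
move=> hn dif.
have hd : dotM (gradF ft lam x) (w - x) =
   n%:R^-1 * \sum_(i < n) dotv (grad (floc ft i) (row i x)) (row i w - row i x)
   + lam / n%:R * \sum_(i < n) dotv (row i x - mean x) (row i w - row i x).
  rewrite /dotM !mulr_sumr -big_split /=; apply: eq_bigr => i _.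
  have -> : row i (w - x) = row i w - row i x by apply/rowP => k; rewrite !mxE.
  by rewrite gradF_row [in LHS]dotvDl ![in LHS]dotvZl.
have eT1 : \sum_(i < n) (m%:R^-1 * \sum_(j < m) (ft i j (row i w) - ft i j (row i x)
        - dotv (grad (ft i j) (row i x)) (row i w - row i x)))
   = \sum_(i < n) floc ft i (row i w) - \sum_(i < n) floc ft i (row i x)
     - \sum_(i < n) dotv (grad (floc ft i) (row i x)) (row i w - row i x).
  rewrite -!sumrB; apply: eq_bigr => i _.
  rewrite grad_floc // dotvZl dotv_suml /floc -!mulrBr -!sumrB //.
have eT2 : \sum_(i < n) \sum_(k < d) ((w i k - mean w ord0 k) - (x i k - mean x ord0 k)) ^+ 2
   = \sum_(i < n) sqnorm (row i w - mean w) - \sum_(i < n) sqnorm (row i x - mean x)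
     - 2 * \sum_(i < n) dotv (row i x - mean x) (row i w - row i x).
  have -> : \sum_(i < n) sqnorm (row i w - mean w) - \sum_(i < n) sqnorm (row i x - mean x)
     - 2 * \sum_(i < n) dotv (row i x - mean x) (row i w - row i x)
     = \sum_(i < n) \sum_(k < d) ((w i k - mean w ord0 k) ^+ 2 - (x i k - mean x ord0 k) ^+ 2
         - 2 * ((x i k - mean x ord0 k) * (w i k - x i k))).
    rewrite mulr_sumr -!sumrB; apply: eq_bigr => i _.
    rewrite /sqnorm /dotv mulr_sumr -!sumrB; apply: eq_bigr => k _.
    by rewrite !rowBmean rowBrow expr2 expr2.
  have -> : \sum_(i < n) \sum_(k < d) ((w i k - mean w ord0 k) - (x i k - mean x ord0 k)) ^+ 2
     = \sum_(i < n) \sum_(k < d) (((w i k - mean w ord0 k) ^+ 2 - (x i k - mean x ord0 k) ^+ 2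
         - 2 * ((x i k - mean x ord0 k) * (w i k - x i k)))
         + 2 * (mean w ord0 k - mean x ord0 k) * (x i k - mean x ord0 k)).
    by apply: eq_bigr => i _; apply: eq_bigr => k _; ring.
  rewrite (eq_bigr _ (fun i _ => big_split _ _ _ _ _)) big_split /=.
  have -> : \sum_(i < n) \sum_(k < d)
        2 * (mean w ord0 k - mean x ord0 k) * (x i k - mean x ord0 k) = 0.
    by rewrite exchange_big /= big1 // => k _; rewrite -mulr_sumr sum_tx // mulr0.
  by rewrite addr0.
rewrite /bregF /Fobj hd.
have -> : n%:R^-1 * \sum_(i < n) floc ft i (row i w) + lam / (2 * n%:R) * \sum_(i < n) sqnorm (row i w - mean w)
  - (n%:R^-1 * \sum_(i < n) floc ft i (row i x) + lam / (2 * n%:R) * \sum_(i < n) sqnorm (row i x - mean x))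
  - (n%:R^-1 * \sum_(i < n) dotv (grad (floc ft i) (row i x)) (row i w - row i x)
     + lam / n%:R * \sum_(i < n) dotv (row i x - mean x) (row i w - row i x))
  = n%:R^-1 * (\sum_(i < n) floc ft i (row i w) - \sum_(i < n) floc ft i (row i x)
     - \sum_(i < n) dotv (grad (floc ft i) (row i x)) (row i w - row i x))
  + lam / (2 * n%:R) * (\sum_(i < n) sqnorm (row i w - mean w) - \sum_(i < n) sqnorm (row i x - mean x)
     - 2 * \sum_(i < n) dotv (row i x - mean x) (row i w - row i x)).
  have nn : n%:R != 0 :> R by rewrite pnatr_eq0 -lt0n.
  by field.
by rewrite eT1 eT2.
Qed.
End Breg.
Lemma scalar_key (R : realType) (n m : nat) (lam p : R) (a : 'I_m -> R)
   (GX GW tx tw : R) :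
  (0 < n)%N -> (0 < m)%N -> 0 < p -> p < 1 ->
  GX - GW = m%:R^-1 * \sum_(j < m) a j ->
  (1 - p) * (m%:R^-1 * \sum_(j < m)
     ((n%:R * (1 - p))^-1 * a j + n%:R^-1 * GW + lam / n%:R * tw
       - (n%:R^-1 * GX + lam / n%:R * tx)) ^+ 2)
  + p * ((lam / (n%:R * p)) * tx - ((p^-1 - 1) * lam / n%:R) * tw + n%:R^-1 * GW
       - (n%:R^-1 * GX + lam / n%:R * tx)) ^+ 2
  <= (n%:R * (1 - p))^-1 ^+ 2 * (1 - p) * (m%:R^-1 * \sum_(j < m) a j ^+ 2)
     + (lam / n%:R) ^+ 2 / p * (tw - tx) ^+ 2.
Proof.
move=> hn hm hp0 hp1 hsum.
set c := (n%:R * (1 - p))^-1.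
set B := n%:R^-1 * GW + lam / n%:R * tw - (n%:R^-1 * GX + lam / n%:R * tx).
have E : \sum_(j < m) (c * a j + n%:R^-1 * GW + lam / n%:R * tw
       - (n%:R^-1 * GX + lam / n%:R * tx)) ^+ 2 =
   c ^+ 2 * \sum_(j < m) a j ^+ 2 + 2 * c * B * \sum_(j < m) a j + m%:R * B ^+ 2.
  have -> : m%:R * B ^+ 2 = \sum_(j < m) B ^+ 2 by rewrite sumr_const card_ord mulr_natl.
  rewrite mulr_sumr mulr_sumr -!big_split /=; apply: eq_bigr => j _; rewrite /B; ring.
rewrite E.
have Sa : \sum_(j < m) a j = m%:R * (GX - GW).
  by rewrite hsum mulrA mulfV ?mul1r // pnatr_eq0 -lt0n.
rewrite Sa.
set Sa2 := \sum_(j < m) a j ^+ 2.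
have nn : n%:R != 0 :> R by rewrite pnatr_eq0 -lt0n.
have mn : m%:R != 0 :> R by rewrite pnatr_eq0 -lt0n.
have pn : p != 0 by rewrite gt_eqF.
have p1n : 1 - p != 0 by rewrite subr_eq0 eq_sym lt_eqF.
set u := n%:R^-1 * (GX - GW).
set v := lam / n%:R * (tx - tw).
have id : (1 - p) * (m%:R^-1 * (c ^+ 2 * Sa2 + 2 * c * B * (m%:R * (GX - GW)) + m%:R * B ^+ 2))
  + p * (lam / (n%:R * p) * tx - (p^-1 - 1) * lam / n%:R * tw + n%:R^-1 * GW
      - (n%:R^-1 * GX + lam / n%:R * tx)) ^+ 2
  = c ^+ 2 * (1 - p) * (m%:R^-1 * Sa2) + (lam / n%:R) ^+ 2 / p * (tw - tx) ^+ 2 - (u + v) ^+ 2.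
  rewrite /c /B /u /v; field; rewrite nn mn pn p1n //.
rewrite id; have := sqr_ge0 (u + v); lra.
Qed.
Lemma avg_ffun (R : realType) (n m : nat) (Q : 'I_n -> 'I_m -> R) :
  (0 < n)%N -> (0 < m)%N ->
  (m ^ n)%:R^-1 * \sum_(js : {ffun 'I_n -> 'I_m}) \sum_(i < n) Q i (js i)
  = \sum_(i < n) (m%:R^-1 * \sum_(j < m) Q i j).
Proof.
move=> hn hm.
rewrite exchange_big /= mulr_sumr; apply: eq_bigr => i _.
pose F := fun (l : 'I_n) (j : 'I_m) => if l == i then Q i j else 1.
have E : \sum_(js : {ffun 'I_n -> 'I_m}) Q i (js i)
   = \sum_(js : {ffun 'I_n -> 'I_m}) \prod_(l < n) F l (js l).
  apply: eq_bigr => js _; rewrite (bigD1 i) //= /F eqxx big1 ?mulr1 //.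
  by move=> l hl; rewrite (negbTE hl).
rewrite E -bigA_distr_bigA /= (bigD1 i) //= {1}/F eqxx.

rewrite [X in _ * (_ * X)](eq_bigr (fun _ => m%:R)); last first.
  move=> l hl; rewrite /F (negbTE hl) sumr_const card_ord.
  by rewrite -mulr_natl mulr1.
rewrite prodr_const cardC1 card_ord.
have mn : m%:R != 0 :> R by rewrite pnatr_eq0 -lt0n.
rewrite natrX -{1}(prednK hn) exprS invfM mulrC !mulrA.
have mk : m%:R ^+ n.-1 != 0 :> R by rewrite expf_neq0.
by field; rewrite mn mk.
Qed.

Lemma subE (R : realType) d (u v : 'rV[R]_d) k : (u - v) ord0 k = u ord0 k - v ord0 k.
Proof. by rewrite !mxE. Qed.

Lemma grad_floc_entry (R : realType) n m d (ft : 'I_n -> 'I_m -> 'rV[R]_d -> R) i z k :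
  (forall j, differentiable (ft i j) z) ->
  grad (floc ft i) z ord0 k = m%:R^-1 * \sum_(j < m) grad (ft i j) z ord0 k.
Proof.
move=> df; rewrite grad_floc //.
have -> : (m%:R^-1 *: \sum_(j < m) grad (ft i j) z) ord0 k
   = m%:R^-1 * (\sum_(j < m) grad (ft i j) z) ord0 k by rewrite [LHS]mxE.
by rewrite summxE.
Qed.

Lemma arith1 (R : realType) (N p Lt P : R) : N != 0 -> 1 - p != 0 ->
  (N * (1 - p))^-1 ^+ 2 * (1 - p) * (2 * Lt * P) = 2 * (Lt / (N * (1 - p))) * (N^-1 * P).
Proof. by move=> h1 h2; field; rewrite h1 h2. Qed.

Lemma arith2 (R : realType) (N p lam Q : R) : N != 0 -> p != 0 ->
  (lam / N) ^+ 2 / p * Q = 2 * (lam / (N * p)) * (lam / (2 * N) * Q).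
Proof. by move=> h1 h2; field; rewrite h1 h2. Qed.

Theorem mainTheorem7 (R : realType) (n m d : nat)
  (ft : 'I_n -> 'I_m -> 'rV[R]_d -> R) (Lt lam p : R)
  (hn : (0 < n)%N) (hm : (0 < m)%N)
  (hconv : forall i j, convex_fun (ft i j))
  (hsmooth : forall i j, smooth_fun Lt (ft i j))
  (hlam : 0 < lam) (hp0 : 0 < p) (hp1 : p < 1)
  (x w : 'M[R]_(n, d)) :
  expected_sqerr ft lam p x w
    <= 2 * Num.max (Lt / (n%:R * (1 - p))) (lam / (n%:R * p)) * bregF ft lam w x.
Proof.
have dif : forall i j z, differentiable (ft i j) z by move=> i j z; exact: (hsmooth i j).1.
set c := (n%:R * (1 - p))^-1.
pose a i j k := grad (ft i j) (row i x) ord0 k - grad (ft i j) (row i w) ord0 k.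
pose y i k := (w i k - mean w ord0 k) - (x i k - mean x ord0 k).
pose D i j := ft i j (row i w) - ft i j (row i x)
   - dotv (grad (ft i j) (row i x)) (row i w - row i x).
pose P := \sum_(i < n) (m%:R^-1 * \sum_(j < m) D i j).
pose Q := \sum_(i < n) \sum_(k < d) y i k ^+ 2.
set C := c ^+ 2 * (1 - p).
set K := (lam / n%:R) ^+ 2 / p.
have stepA : expected_sqerr ft lam p x w <=
   \sum_(i < n) \sum_(k < d) (C * (m%:R^-1 * \sum_(j < m) a i j k ^+ 2) + K * y i k ^+ 2).
  rewrite /expected_sqerr.
  pose e i j k := c * (grad (ft i j) (row i x) ord0 k - grad (ft i j) (row i w) ord0 k)
    + n%:R^-1 * grad (floc ft i) (row i w) ord0 k + lam / n%:R * (w i k - mean w ord0 k)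
    - (n%:R^-1 * grad (floc ft i) (row i x) ord0 k + lam / n%:R * (x i k - mean x ord0 k)).
  have E1 : \sum_(js : {ffun 'I_n -> 'I_m}) sqnormM (g_sample ft lam p x w js - gradF ft lam x)
     = \sum_(js : {ffun 'I_n -> 'I_m}) \sum_(i < n) (fun i j => \sum_(k < d) e i j k ^+ 2) i (js i).
    apply: eq_bigr => js _; rewrite sqnormM_E; apply: eq_bigr => i _.
    by apply: eq_bigr => k _; rewrite gs_entry.
  rewrite E1 (@avg_ffun R n m (fun i j => \sum_(k < d) e i j k ^+ 2)) // sqnormM_E mulr_sumr mulr_sumr -big_split /=.
  apply: ler_sum => i _.
  rewrite exchange_big /= mulr_sumr mulr_sumr mulr_sumr -big_split /=.
  apply: ler_sum => k _.
  rewrite gf_entry /e /C /K /y /c.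
  apply: (@scalar_key R n m lam p (fun j => a i j k)) => //.
  rewrite /a !grad_floc_entry // -mulrBr -sumrB //.
have SA : forall i j, \sum_(k < d) a i j k ^+ 2 <= 2 * Lt * D i j.
  move=> i j; have := @cocoer R d (ft i j) Lt (row i x) (row i w) (hconv i j) (hsmooth i j).
  suff -> : \sum_(k < d) a i j k ^+ 2 = sqnorm (grad (ft i j) (row i w) - grad (ft i j) (row i x)) by [].
  rewrite /sqnorm /dotv; apply: eq_bigr => k _; rewrite subE /a; ring.
have D0 : forall i j, 0 <= D i j.
  move=> i j; rewrite /D -derive_dot //; have := @grad_ineq R d (ft i j) (row i x) (row i w) (hconv i j) (dif i j (row i x)).
  lra.
have P0 : 0 <= P.
  apply: sumr_ge0 => i _; apply: mulr_ge0; first by rewrite invr_ge0 ler0n.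
  by apply: sumr_ge0 => j _.
have Q0 : 0 <= Q by apply: sumr_ge0 => i _; apply: sumr_ge0 => k _; exact: sqr_ge0.
have C0 : 0 <= C by rewrite /C mulr_ge0 ?sqr_ge0 // subr_ge0 ltW.
have B1 : \sum_(i < n) \sum_(k < d) (C * (m%:R^-1 * \sum_(j < m) a i j k ^+ 2) + K * y i k ^+ 2)
   = C * \sum_(i < n) (m%:R^-1 * \sum_(j < m) \sum_(k < d) a i j k ^+ 2) + K * Q.
  rewrite /Q mulr_sumr mulr_sumr -big_split /=; apply: eq_bigr => i _.
  rewrite big_split /=; congr (_ + _); last by rewrite -mulr_sumr.
  by rewrite -mulr_sumr exchange_big /= -mulr_sumr.
have B2 : C * \sum_(i < n) (m%:R^-1 * \sum_(j < m) \sum_(k < d) a i j k ^+ 2) <= C * (2 * Lt * P).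
  apply: ler_wpM2l => //; rewrite /P mulr_sumr; apply: ler_sum => i _.
  rewrite mulrCA; apply: ler_wpM2l; first by rewrite invr_ge0 ler0n.
  by rewrite mulr_sumr; apply: ler_sum => j _; exact: SA.
rewrite (@breg_decomp R n m d ft lam x w hn dif) -/P -/Q.
have nn : n%:R != 0 :> R by rewrite pnatr_eq0 -lt0n.
have n0 : 0 < n%:R :> R by rewrite ltr0n.
have pn : p != 0 by rewrite gt_eqF.
have p1n : 1 - p != 0 by rewrite subr_eq0 eq_sym lt_eqF.
set L1 := Lt * c.
set L2 := lam / (n%:R * p).
set M := Num.max L1 L2.
have hM1 : L1 <= M by rewrite /M le_max lexx.
have hM2 : L2 <= M by rewrite /M le_max lexx orbT.
have eC : C * (2 * Lt * P) = 2 * L1 * (n%:R^-1 * P) by rewrite /C /L1 /c; exact: arith1.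
have eK : K * Q = 2 * L2 * (lam / (2 * n%:R) * Q) by rewrite /K /L2; exact: arith2.
have P'0 : 0 <= n%:R^-1 * P by rewrite mulr_ge0 // invr_ge0 ltW.
have Q'0 : 0 <= lam / (2 * n%:R) * Q.
  apply: mulr_ge0 => //; apply: divr_ge0; [exact: ltW | apply: mulr_ge0 => //; exact: ltW].
apply: (le_trans stepA); rewrite B1.
apply: (le_trans (lerD B2 (lexx (K * Q)))); rewrite eC eK.
set P' := n%:R^-1 * P; set Q' := lam / (2 * n%:R) * Q.
have h1 := ler_wpM2r P'0 hM1; have h2 := ler_wpM2r Q'0 hM2; rewrite /P' /Q'; lra.
Qed.
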